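(* Let $\{f_j\}_{j=1}^m$, $m\ge2$, be an iterated function system of similarities of $\mathbb{C}$ with common contraction ratio $|\lambda|<1$ and connected attractor $A=\bigcup_j A_j$, $A_j=f_j(A)$, which is invertible with map $q:A\to A$ and has finite nonempty overlap set $\mathcal{O}$. Suppose $q$ is critically non-recurrent. Then there exist constants $C\ge1$ and $\delta_1>0$ such that for every connected set $S\subset A$ and every integer $n\ge0$, $$C^{-1}|\lambda|^{-n}\operatorname{diam}S\le\operatorname{diam}q^n(S)\le C|\lambda|^{-n}\operatorname{diam}S,$$ provided either $\operatorname{diam}q^n(S)<\delta_1$ or $|\lambda|^{-n}\operatorname{diam}S<\delta_1$.
   Context: Each $f_j$ is of the form $f_j(z)=|\lambda|e^{i\theta_j}z+d_j$ or $f_j(z)=|\lambda|e^{i\theta_j}\overline{z}+d_j$, and $A$ is the unique nonempty compact set with $A=\bigcup_j f_j(A)$. Invertible means there is a continuous $q:A\to A$ with $q|_{A_j}$ equal to the inverse of $f_j:A\to A_j$ for each $j$. The overlap set is $\mathcal{O}=\bigcup_{i\ne j}(A_i\cap A_j)$. $q$ is critically non-recurrent if for every $z\in\mathcal{O}$ the limit set of $\{q^n(z)\}_{n\ge1}$ does not contain $z$. *)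

(* Defs.v *)
From Stdlib Require Import Reals Lra Lia List.
From Coquelicot Require Import Coquelicot.
Open Scope R_scope.

Definition cdist (z w : C) : R := Cmod (Cminus z w).

Definition openC (U : C -> Prop) : Prop :=
  forall z, U z -> exists e, 0 < e /\ forall w, cdist w z < e -> U w.

Definition connectedC (S : C -> Prop) : Prop :=
  forall U V : C -> Prop, openC U -> openC V ->
    (forall z, S z -> U z \/ V z) ->
    (exists z, S z /\ U z) -> (exists z, S z /\ V z) ->
    exists z, S z /\ U z /\ V z.

Definition compactC (A : C -> Prop) : Prop :=
  forall u : nat -> C, (forall n, A (u n)) ->
    exists (phi : nat -> nat) (l : C),
      (forall n, (phi n < phi (S n))%nat) /\ A l /\
      forall e, 0 < e -> exists N, forall n, (N <= n)%nat -> cdist (u (phi n)) l < e.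

(* diameter: supremum of |x - y| over x, y in S (0 for the empty set) *)
Definition diam (S : C -> Prop) : R :=
  real (Lub_Rbar (fun r => exists x y, S x /\ S y /\ r = cdist x y)).

Definition img (g : C -> C) (S : C -> Prop) : C -> Prop :=
  fun w => exists z, S z /\ w = g z.

Definition iterf (n : nat) (g : C -> C) : C -> C := Nat.iter n g.

Definition simil (r th : R) (cj : bool) (d : C) (z : C) : C :=
  Cplus (Cmult (Cmult (RtoC r) (cos th, sin th)) (if cj then Cconj z else z)) d.

Definition ifs_map (r : R) (th : nat -> R) (cj : nat -> bool) (d : nat -> C)
  (j : nat) : C -> C := simil r (th j) (cj j) (d j).

Definition piece (r : R) (th : nat -> R) (cj : nat -> bool) (d : nat -> C)
  (A : C -> Prop) (j : nat) : C -> Prop := img (ifs_map r th cj d j) A.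

(* A is the attractor: nonempty compact with A = \bigcup_{j<m} f_j(A)
   (such a set is unique by Hutchinson's theorem) *)
Definition is_attractor (m : nat) (r : R) (th : nat -> R) (cj : nat -> bool)
  (d : nat -> C) (A : C -> Prop) : Prop :=
  (exists z, A z) /\ compactC A /\
  forall w, A w <-> exists j, (j < m)%nat /\ piece r th cj d A j w.

Definition inverse_map (m : nat) (r : R) (th : nat -> R) (cj : nat -> bool)
  (d : nat -> C) (A : C -> Prop) (q : C -> C) : Prop :=
  (forall z, A z -> A (q z)) /\
  (forall x, A x -> forall e, 0 < e -> exists dl, 0 < dl /\
      forall y, A y -> cdist y x < dl -> cdist (q y) (q x) < e) /\
  (forall j, (j < m)%nat -> forall z, A z -> q (ifs_map r th cj d j z) = z).

Definition overlap (m : nat) (r : R) (th : nat -> R) (cj : nat -> bool)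
  (d : nat -> C) (A : C -> Prop) : C -> Prop :=
  fun z => exists i j, (i < m)%nat /\ (j < m)%nat /\ i <> j /\
    piece r th cj d A i z /\ piece r th cj d A j z.

Definition limit_set (u : nat -> C) : C -> Prop :=
  fun w => forall e, 0 < e -> forall N, exists n, (N <= n)%nat /\ cdist (u n) w < e.

Definition crit_nonrec (O : C -> Prop) (q : C -> C) : Prop :=
  forall z, O z -> ~ limit_set (fun n => iterf (S n) q z) z.

(* Main.v *)
Require Import Defs.
From Stdlib Require Import Reals Lra Lia List Classical ClassicalEpsilon ZArith.
From Coquelicot Require Import Coquelicot.
Open Scope R_scope.

Lemma cdist_sym z w : cdist z w = cdist w z.
Proof. unfold cdist. replace (Cminus z w) with (Copp (Cminus w z)) by ring.
  apply Cmod_opp. Qed.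

Lemma cdist_tri x y z : cdist x z <= cdist x y + cdist y z.
Proof. unfold cdist. replace (Cminus x z) with (Cplus (Cminus x y) (Cminus y z)) by ring.
  apply Cmod_triangle. Qed.

Lemma cdist_ge0 x y : 0 <= cdist x y.
Proof. apply Cmod_ge_0. Qed.

Lemma cdist_refl x : cdist x x = 0.
Proof. unfold cdist. replace (Cminus x x) with (RtoC 0) by ring. apply Cmod_0. Qed.

Lemma cdist_eq0 x y : cdist x y = 0 -> x = y.
Proof. unfold cdist. intro H. apply Cmod_eq_0 in H.
  replace x with (Cplus (Cminus x y) y) by ring. rewrite H. ring. Qed.

Lemma Cmod_rot th : Cmod (cos th, sin th) = 1.
Proof. unfold Cmod. simpl. assert (H := sin2_cos2 th). unfold Rsqr in H.
  replace (cos th * (cos th * 1) + sin th * (sin th * 1)) with 1 by nra. apply sqrt_1. Qed.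

Lemma simil_dist rr th cj dd a b : 0 < rr ->
  cdist (simil rr th cj dd a) (simil rr th cj dd b) = rr * cdist a b.
Proof. intro Hr. unfold cdist, simil.
  set (u := Cmult (RtoC rr) (cos th, sin th)).
  replace (Cminus (Cplus (Cmult u (if cj then Cconj a else a)) dd)
     (Cplus (Cmult u (if cj then Cconj b else b)) dd))
   with (Cmult u (Cminus (if cj then Cconj a else a) (if cj then Cconj b else b))) by ring.
  rewrite Cmod_mult. unfold u. rewrite Cmod_mult, Cmod_rot, Cmod_R, Rabs_right by lra.
  destruct cj.
  - rewrite <- Cminus_conj, Cmod_conj. ring.
  - ring.
Qed.

Lemma fin_eps {X : Type} (P : R -> X -> Prop) (l : list X) :
  (forall e e' x, 0 < e' -> e' <= e -> P e x -> P e' x) ->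
  (forall x, In x l -> exists e, 0 < e /\ P e x) ->
  exists e, 0 < e /\ forall x, In x l -> P e x.
Proof.
  intros Hm. induction l as [|a l IH]; intro H.
  - exists 1. split; [lra|]. intros x [].
  - destruct (H a (or_introl eq_refl)) as [e1 [He1 P1]].
    destruct IH as [e2 [He2 P2]].
    { intros x Hx. apply H. right. exact Hx. }
    exists (Rmin e1 e2). split. { apply Rmin_case; lra. }
    intros x [<-|Hx].
    + apply (Hm e1); auto. apply Rmin_case; lra. apply Rmin_l.
    + apply (Hm e2); auto. apply Rmin_case; lra. apply Rmin_r.
Qed.

Lemma fin_eps_nat (P : R -> nat -> Prop) (n : nat) :
  (forall e e' x, 0 < e' -> e' <= e -> P e x -> P e' x) ->
  (forall k, (k < n)%nat -> exists e, 0 < e /\ P e k) ->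
  exists e, 0 < e /\ forall k, (k < n)%nat -> P e k.
Proof.
  intros Hm H. destruct (fin_eps P (seq 0 n) Hm) as [e [He HP]].
  { intros x Hx. apply in_seq in Hx. apply H. lia. }
  exists e. split; auto. intros k Hk. apply HP. apply in_seq. lia.
Qed.

Lemma filter_len_mono {X} (p p' : X -> bool) (l : list X) :
  (forall x, p x = true -> p' x = true) ->
  (length (filter p l) <= length (filter p' l))%nat.
Proof. intro H. induction l as [|a l IH]; simpl; auto.
  destruct (p a) eqn:E1.
  - rewrite (H a E1). simpl. lia.
  - destruct (p' a); simpl; lia. Qed.

Lemma filter_len_strict {X} (p p' : X -> bool) (l : list X) :
  (forall x, p x = true -> p' x = true) ->
  forall y, In y l -> p' y = true -> p y = false ->
  (length (filter p l) < length (filter p' l))%nat.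
Proof. intro H. induction l as [|a l IH]; simpl; intros y Hy H1 H2; [destruct Hy|].
  destruct Hy as [<-|Hy].
  - rewrite H1, H2. simpl. pose proof (filter_len_mono p p' l H). lia.
  - destruct (p a) eqn:E1.
    + rewrite (H a E1). simpl. specialize (IH y Hy H1 H2). lia.
    + specialize (IH y Hy H1 H2). destruct (p' a); simpl; lia.
Qed.

Lemma filter_len_le {X} (p : X -> bool) (l : list X) :
  (length (filter p l) <= length l)%nat.
Proof. induction l; simpl; auto. destruct (p a); simpl; lia. Qed.

Definition dec (P : Prop) : bool :=
  if excluded_middle_informative P then true else false.

Lemma dec_true P : dec P = true <-> P.
Proof. unfold dec. destruct (excluded_middle_informative P); split; intro; auto; discriminate. Qed.

Lemma dec_false P : dec P = false <-> ~ P.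
Proof. unfold dec. destruct (excluded_middle_informative P); split; intro; auto; try discriminate; tauto. Qed.

Lemma diam_ub (B : R) (T : C -> Prop) x y :
  (forall u v, T u -> T v -> cdist u v <= B) ->
  T x -> T y -> cdist x y <= diam T.
Proof.
  intros HB Hx Hy. unfold diam.
  destruct (Lub_Rbar_correct (fun r => exists x y, T x /\ T y /\ r = cdist x y)) as [Hub Hl].
  assert (H1 : Rbar_le (cdist x y) (Lub_Rbar (fun r => exists x y, T x /\ T y /\ r = cdist x y))).
  { apply Hub. exists x, y. auto. }
  assert (H2 : Rbar_le (Lub_Rbar (fun r => exists x y, T x /\ T y /\ r = cdist x y)) B).
  { apply Hl. intros r [u [v [Hu [Hv ->]]]]. simpl. apply HB; auto. }
  destruct (Lub_Rbar _); simpl in *; tauto.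
Qed.

Lemma diam_le (T : C -> Prop) M : 0 <= M ->
  (forall u v, T u -> T v -> cdist u v <= M) -> diam T <= M.
Proof.
  intros HM HB. unfold diam.
  destruct (Lub_Rbar_correct (fun r => exists x y, T x /\ T y /\ r = cdist x y)) as [Hub Hl].
  assert (H2 : Rbar_le (Lub_Rbar (fun r => exists x y, T x /\ T y /\ r = cdist x y)) M).
  { apply Hl. intros r [u [v [Hu [Hv ->]]]]. simpl. apply HB; auto. }
  destruct (Lub_Rbar _); simpl in *; tauto.
Qed.

Lemma diam_ge0 (B : R) (T : C -> Prop) :
  (forall u v, T u -> T v -> cdist u v <= B) -> 0 <= diam T.
Proof.
  intros HB. destruct (classic (exists x, T x)) as [[x Hx]|Hn].
  - rewrite <- (cdist_refl x). apply (diam_ub B); auto.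
  - unfold diam.
    destruct (Lub_Rbar_correct (fun r => exists x y, T x /\ T y /\ r = cdist x y)) as [Hub Hl].
    assert (Hall : forall b : R, Rbar_le (Lub_Rbar (fun r => exists x y, T x /\ T y /\ r = cdist x y)) b).
    { intro b. apply Hl. intros r [u [v [Hu _]]]. exfalso. eauto. }
    destruct (Lub_Rbar _) as [v| |] eqn:E; simpl.
    + specialize (Hall (v - 1)). simpl in Hall. lra.
    + specialize (Hall 0). simpl in Hall. tauto.
    + lra.
Qed.

Lemma diam_ext (T T' : C -> Prop) : (forall z, T z <-> T' z) -> diam T = diam T'.
Proof. intro H. unfold diam. f_equal. apply Lub_Rbar_eqset.
  intro r. split; intros [x [y [Hx [Hy ->]]]]; exists x, y; repeat split; auto; apply H; auto. Qed.

Definition closedC (F : C -> Prop) : Prop :=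
  forall z, ~ F z -> exists e, 0 < e /\ forall w, cdist w z < e -> ~ F w.

Lemma connected_closed (S F1 F2 : C -> Prop) :
  connectedC S -> closedC F1 -> closedC F2 ->
  (forall z, S z -> F1 z \/ F2 z) ->
  (exists z, S z /\ F1 z) -> (exists z, S z /\ F2 z) ->
  exists z, S z /\ F1 z /\ F2 z.
Proof.
  intros HS C1 C2 Hc [x [Sx F1x]] [y [Sy F2y]].
  apply NNPP. intro Hno.
  assert (Hd : forall z, S z -> F1 z -> ~ F2 z) by (intros z a b c; apply Hno; eauto).
  destruct (HS (fun z => ~ F2 z) (fun z => ~ F1 z)) as [z [Sz [U V]]].
  - intros z Hz. destruct (C2 z Hz) as [e [He H]]. exists e. split; auto.
  - intros z Hz. destruct (C1 z Hz) as [e [He H]]. exists e. split; auto.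
  - intros z Sz. destruct (Hc z Sz) as [H|H].
    + left. apply Hd; auto.
    + right. intro H1. apply (Hd z Sz H1 H).
  - exists x. split; auto.
  - exists y. split; auto. intro H1. apply (Hd y Sy H1 F2y).
  - destruct (Hc z Sz); tauto.
Qed.

Lemma arch_nat x : exists n, x < INR n.
Proof.
  destruct (archimed x) as [H _].
  destruct (Rle_or_lt x 0) as [Hx|Hx].
  - exists 1%nat. simpl. lra.
  - exists (Z.to_nat (up x)). rewrite INR_IZR_INZ, Z2Nat.id; auto.
    apply le_IZR. lra.
Qed.

Lemma arch_inv e : 0 < e -> exists n, / (INR n + 1) < e.
Proof.
  intro He. destruct (arch_nat (/ e)) as [n Hn]. exists n.
  assert (0 < /e) by (apply Rinv_0_lt_compat; lra).
  rewrite <- (Rinv_inv e). apply Rinv_lt_contravar.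
  - apply Rmult_lt_0_compat; auto. pose proof (pos_INR n); lra.
  - lra.
Qed.

Lemma phi_ge (phi : nat -> nat) : (forall n, (phi n < phi (S n))%nat) -> forall n, (n <= phi n)%nat.
Proof. intros H n. induction n; [lia|]. specialize (H n). lia. Qed.

Lemma choice_nat (P : nat -> C -> Prop) : (forall n, exists x, P n x) ->
  exists u : nat -> C, forall n, P n (u n).
Proof. intro H. exists (fun n => proj1_sig (constructive_indefinite_description _ (H n))).
  intro n. exact (proj2_sig (constructive_indefinite_description _ (H n))). Qed.

Lemma compact_bounded A : compactC A -> exists B, forall u v, A u -> A v -> cdist u v <= B.
Proof.
  intro HA. destruct (classic (exists x0, A x0)) as [[x0 Hx0]|Hn].
  2:{ exists 0. intros u v Hu. exfalso. eauto. }
  assert (Hb : exists B, forall u, A u -> cdist u x0 <= B).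
  { apply NNPP. intro Hno.
    assert (H : forall n : nat, exists x, A x /\ INR n < cdist x x0).
    { intro n. apply NNPP. intro H1. apply Hno. exists (INR n). intros u Hu.
      apply Rnot_lt_le. intro H2. apply H1. eauto. }
    destruct (choice_nat _ H) as [u Hu].
    destruct (HA u (fun n => proj1 (Hu n))) as [phi [l0 [Hphi [Hl0 Hc]]]].
    destruct (Hc 1 Rlt_0_1) as [N HN].
    destruct (arch_nat (1 + cdist l0 x0)) as [k Hk].
    set (n := Nat.max N k).
    specialize (HN n (Nat.le_max_l _ _)).
    pose proof (proj2 (Hu (phi n))).
    pose proof (phi_ge phi Hphi n).
    assert (INR k <= INR (phi n)) by (apply le_INR; unfold n in *; lia).
    pose proof (cdist_tri (u (phi n)) l0 x0). lra. }
  destruct Hb as [B HB]. exists (2 * B). intros u v Hu Hv.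
  pose proof (cdist_tri u x0 v). rewrite (cdist_sym x0 v) in H.
  pose proof (HB u Hu). pose proof (HB v Hv). lra.
Qed.

Lemma seq_close (A : C -> Prop) (g : C -> C) (K : R) z : compactC A -> 0 <= K ->
  (forall a b, cdist (g a) (g b) <= K * cdist a b) ->
  (forall e, 0 < e -> exists a, A a /\ cdist (g a) z < e) ->
  exists a, A a /\ g a = z.
Proof.
  intros HA HK Hg Hz.
  assert (H : forall n : nat, exists a, A a /\ cdist (g a) z < / (INR n + 1)).
  { intro n. apply Hz. apply Rinv_0_lt_compat. pose proof (pos_INR n). lra. }
  destruct (choice_nat _ H) as [u Hu].
  destruct (HA u (fun n => proj1 (Hu n))) as [phi [l0 [Hphi [Hl0 Hc]]]].
  exists l0. split; auto. apply cdist_eq0. apply NNPP. intro Hne.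
  assert (Hc0 : 0 < cdist (g l0) z) by (pose proof (cdist_ge0 (g l0) z); lra).
  set (c := cdist (g l0) z) in *.
  destruct (Hc (c / (2 * (K + 1)))) as [N HN].
  { apply Rdiv_lt_0_compat; lra. }
  destruct (arch_inv (c / 2)) as [k Hk]; [lra|].
  set (n := Nat.max N k).
  specialize (HN n (Nat.le_max_l _ _)).
  pose proof (proj2 (Hu (phi n))).
  pose proof (phi_ge phi Hphi n).
  assert (INR k <= INR (phi n)) by (apply le_INR; unfold n in *; lia).
  assert (/ (INR (phi n) + 1) <= / (INR k + 1)).
  { apply Rinv_le_contravar. pose proof (pos_INR k); lra. lra. }
  pose proof (cdist_tri (g l0) (g (u (phi n))) z).
  pose proof (Hg l0 (u (phi n))). rewrite cdist_sym in HN.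
  assert (K * cdist l0 (u (phi n)) <= K * (c / (2 * (K + 1)))).
  { apply Rmult_le_compat_l; lra. }
  assert (K * (c / (2 * (K + 1))) < c / 2).
  { unfold Rdiv. rewrite Rinv_mult.
    replace (K * (c * (/ 2 * / (K + 1)))) with ((c / 2) * (K / (K + 1))) by (field; lra).
    assert (K / (K + 1) < 1).
    { apply Rmult_lt_reg_r with (K + 1); [lra|]. unfold Rdiv. rewrite Rmult_assoc, Rinv_l; lra. }
    assert (0 < c / 2) by lra. nra. }
  unfold c in *. lra.
Qed.
Lemma arith_a r ir s0 s1 sk p a a' : 0 <= s0 -> 0 <= s1 -> 0 < ir -> r * ir = 1 -> 0 <= p -> 0 < a -> a <= a' ->
  s0 * p <= a * sk -> sk <= a * p * s0 -> sk = r * s1 ->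
  s0 * (ir * p) <= a' * s1 /\ s1 <= a' * (ir * p) * s0.
Proof. intros. assert (E : s1 = ir * sk) by (subst; nra). split.
 - assert (ir * (s0 * p) <= ir * (a * sk)) by (apply Rmult_le_compat_l; lra).
   assert (a * s1 <= a' * s1) by (apply Rmult_le_compat_r; lra). nra.
 - assert (ir * sk <= ir * (a * p * s0)) by (apply Rmult_le_compat_l; lra).
   assert (0 <= ir * p * s0) by (apply Rmult_le_pos; [apply Rmult_le_pos|]; lra).
   assert (a * (ir * p * s0) <= a' * (ir * p * s0)) by (apply Rmult_le_compat_r; lra). nra.
Qed.
Lemma arith_b r ir s0 s1 sk p a a' : 0 <= s0 -> 0 <= s1 -> 0 < ir -> r * ir = 1 -> 0 <= p -> 0 < a -> 2 * a <= a' -> 0 < r ->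
  s0 * p <= a * sk -> sk <= a * p * s0 -> sk <= 2 * (r * s1) -> r * s1 <= 2 * sk ->
  s0 * (ir * p) <= a' * s1 /\ s1 <= a' * (ir * p) * s0.
Proof. intros H0 H1 H2 H3 H4 H5 H6 H7 H8 H9 H10 H11. split.
 - assert (a * ir * (2 * (r * s1)) = 2 * a * s1) by (transitivity (2*a*s1*(r*ir)); [ring | rewrite H3; ring]).
   assert (ir * (s0 * p) <= ir * (a * sk)) by (apply Rmult_le_compat_l; lra).
   assert (a * ir * sk <= a * ir * (2 * (r * s1))) by (apply Rmult_le_compat_l; [apply Rmult_le_pos; lra | lra]).
   assert (2 * a * s1 <= a' * s1) by (apply Rmult_le_compat_r; lra). lra.
 - assert (E : s1 = ir * (r * s1)) by nra.
   assert (ir * (r * s1) <= ir * (2 * sk)) by (apply Rmult_le_compat_l; lra).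
   assert (ir * sk <= ir * (a * p * s0)) by (apply Rmult_le_compat_l; lra).
   assert (0 <= ir * p * s0) by (apply Rmult_le_pos; [apply Rmult_le_pos|]; lra).
   assert (2 * a * (ir * p * s0) <= a' * (ir * p * s0)) by (apply Rmult_le_compat_r; lra). nra.
Qed.

Section Main.
Variables (m : nat) (r : R) (th : nat -> R) (cj : nat -> bool) (d : nat -> C)
  (A : C -> Prop) (q : C -> C) (l : list C).
Hypothesis Hm : (2 <= m)%nat.
Hypothesis Hr0 : 0 < r.
Hypothesis Hr1 : r < 1.
Hypothesis Hatt : is_attractor m r th cj d A.
Hypothesis Hinv : inverse_map m r th cj d A q.
Hypothesis Hl : forall z, overlap m r th cj d A z <-> In z l.
Hypothesis Hcnr : crit_nonrec (overlap m r th cj d A) q.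

Local Notation f := (ifs_map r th cj d).
Local Notation P := (piece r th cj d A).
Local Notation O := (overlap m r th cj d A).

Lemma f_dist j a b : cdist (f j a) (f j b) = r * cdist a b.
Proof. unfold ifs_map. apply simil_dist; auto. Qed.

Lemma A_compact : compactC A.
Proof. apply Hatt. Qed.

Lemma A_bnd : exists B, forall u v, A u -> A v -> cdist u v <= B.
Proof. apply compact_bounded, A_compact. Qed.

Lemma A_cover z : A z -> exists j, (j < m)%nat /\ P j z.
Proof. intro H. apply Hatt. exact H. Qed.

Lemma P_A j z : (j < m)%nat -> P j z -> A z.
Proof. intros Hj H. apply Hatt. eauto. Qed.

Lemma qA z : A z -> A (q z).
Proof. apply Hinv. Qed.

Lemma q_f j a : (j < m)%nat -> A a -> q (f j a) = a.
Proof. intros. apply Hinv; auto. Qed.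

Lemma q_same j z w : (j < m)%nat -> P j z -> P j w -> cdist z w = r * cdist (q z) (q w).
Proof. intros Hj [a [Ha ->]] [b [Hb ->]]. rewrite !q_f; auto. apply f_dist. Qed.

Lemma P_closed j : closedC (P j).
Proof.
  intros z Hz. apply NNPP. intro Hno. apply Hz.
  destruct (seq_close A (f j) r z A_compact) as [a [Ha Hfa]].
  - lra.
  - intros a b. rewrite f_dist. lra.
  - intros e He. apply NNPP. intro H1. apply Hno. exists e. split; auto.
    intros w Hw [a [Ha Hwa]]. apply H1. exists a. split; auto. rewrite <- Hwa. auto.
  - exists a. split; auto.
Qed.

Lemma others_closed i : closedC (fun z => exists k, (k < m)%nat /\ k <> i /\ P k z).
Proof.
  intros z Hz.
  destruct (fin_eps_nat (fun e k => k <> i -> forall w, cdist w z < e -> ~ P k w) m) as [e [He H]].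
  - intros e e' x H1 H2 H3 H4 w Hw. apply H3; auto. lra.
  - intros k Hk. destruct (Nat.eq_dec k i) as [->|Hki].
    + exists 1. split; [lra|]. tauto.
    + destruct (P_closed k z) as [e [He H]].
      { intro H. apply Hz. eauto. }
      exists e. split; auto.
  - exists e. split; auto. intros w Hw [k [Hk [Hki Hkw]]]. eapply H; eauto.
Qed.

Lemma eps0_ex : exists e0, 0 < e0 /\ forall o, O o -> forall j, (j < m)%nat ->
  forall z, P j z -> cdist z o < e0 -> P j o.
Proof.
  destruct (fin_eps (fun e o => forall j, (j < m)%nat -> forall z, P j z -> cdist z o < e -> P j o) l)
    as [e [He H]].
  - intros e e' x H1 H2 H3 j Hj z Hz Hd. eapply H3; eauto. lra.
  - intros o Ho.
    destruct (fin_eps_nat (fun e j => forall z, P j z -> cdist z o < e -> P j o) m) as [e [He H]].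
    + intros e e' x H1 H2 H3 z Hz Hd. eapply H3; eauto. lra.
    + intros j Hj. destruct (classic (P j o)) as [Hp|Hp].
      * exists 1. split; [lra|]. auto.
      * destruct (P_closed j o Hp) as [e [He H]]. exists e. split; auto.
        intros z Hz Hd. exfalso. eapply H; eauto.
    + exists e. split; auto.
  - exists e. split; auto. intros o Ho. apply H. apply Hl. exact Ho.
Qed.

Lemma dichotomy (T : C -> Prop) : (forall z, T z -> A z) -> connectedC T ->
  (exists i, (i < m)%nat /\ forall z, T z -> P i z) \/ (exists o, O o /\ T o).
Proof.
  intros HTA HT. destruct (classic (exists x, T x)) as [[x Hx]|Hn].
  2:{ left. exists 0%nat. split; [lia|]. intros z Hz. exfalso. eauto. }
  destruct (A_cover x (HTA x Hx)) as [i [Hi Hix]].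
  destruct (classic (forall z, T z -> P i z)) as [Hall|Hnall].
  { left. eauto. }
  right. apply not_all_ex_not in Hnall. destruct Hnall as [y Hy].
  apply imply_to_and in Hy. destruct Hy as [Ty Hyi].
  destruct (connected_closed T (P i) (fun z => exists k, (k < m)%nat /\ k <> i /\ P k z) HT
    (P_closed i) (others_closed i)) as [w [Tw [H1 [k [Hk [Hki H2]]]]]].
  - intros z Tz. destruct (A_cover z (HTA z Tz)) as [k [Hk Hkz]].
    destruct (Nat.eq_dec k i) as [->|Hki]; [left; auto| right; eauto].
  - eauto.
  - destruct (A_cover y (HTA y Ty)) as [k [Hk Hky]]. exists y. split; auto.
    exists k. repeat split; auto. intros ->. auto.
  - exists w. split; auto. exists i, k. repeat split; auto.
Qed.

Lemma img_A (T : C -> Prop) : (forall z, T z -> A z) -> forall z, img q T z -> A z.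
Proof. intros H z [w [Hw ->]]. apply qA; auto. Qed.

Lemma img_connected (T : C -> Prop) : (forall z, T z -> A z) -> connectedC T -> connectedC (img q T).
Proof.
  intros HTA HT U V HU HV Hcov [x [[x0 [Hx0 ->]] Ux]] [y [[y0 [Hy0 ->]] Vy]].
  set (U' := fun z => exists e, 0 < e /\ forall w, A w -> cdist w z < e -> U (q w)).
  set (V' := fun z => exists e, 0 < e /\ forall w, A w -> cdist w z < e -> V (q w)).
  assert (Hop : forall W : C -> Prop, openC W -> openC (fun z => exists e, 0 < e /\ forall w, A w -> cdist w z < e -> W (q w))).
  { intros W HW z [e [He H]]. exists (e / 2). split; [lra|]. intros z' Hz'.
    exists (e / 2). split; [lra|]. intros w Hw Hwz. apply H; auto.
    pose proof (cdist_tri w z' z). lra. }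
  assert (Htr : forall W : C -> Prop, openC W -> forall z, A z -> W (q z) ->
     exists e, 0 < e /\ forall w, A w -> cdist w z < e -> W (q w)).
  { intros W HW z Hz Hw. destruct (HW _ Hw) as [e [He H]].
    destruct Hinv as [_ [Hc _]]. destruct (Hc z Hz e He) as [dl [Hdl H2]].
    exists dl. split; [exact Hdl|]. intros w Hwa Hwz. apply H. apply H2; auto. }
  destruct (HT U' V' (Hop U HU) (Hop V HV)) as [z [Tz [[e1 [He1 H1]] [e2 [He2 H2]]]]].
  - intros z Tz. destruct (Hcov (q z)) as [H|H]. exists z; auto.
    + left. apply Htr; auto.
    + right. apply Htr; auto.
  - exists x0. split; auto. apply Htr; auto.
  - exists y0. split; auto. apply Htr; auto.
  - exists (q z). split. exists z; auto. split.
    + apply H1; auto. rewrite cdist_refl; auto.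
    + apply H2; auto. rewrite cdist_refl; auto.
Qed.


Lemma conn_ext (T T' : C -> Prop) : (forall z, T z <-> T' z) -> connectedC T -> connectedC T'.
Proof.
  intros H HT U V HU HV Hc [x [Tx Ux]] [y [Ty Vy]].
  destruct (HT U V HU HV) as [z [Tz Hz]].
  - intros z Tz. apply Hc. apply H. auto.
  - exists x. split; auto. apply H; auto.
  - exists y. split; auto. apply H; auto.
  - exists z. split; auto. apply H; auto.
Qed.

Lemma Tn_succ (S0 : C -> Prop) k z : img (iterf (S k) q) S0 z <-> img q (img (iterf k q) S0) z.
Proof. split.
  - intros [w [Hw ->]]. exists (iterf k q w). split; [exists w; auto | reflexivity].
  - intros [w [[u [Hu ->]] ->]]. exists u. split; auto.
Qed.

Lemma Tn_A (S0 : C -> Prop) : (forall z, S0 z -> A z) -> forall k z, img (iterf k q) S0 z -> A z.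
Proof. intros H k. induction k; intros z Hz.
  - destruct Hz as [w [Hw ->]]. apply H; auto.
  - apply Tn_succ in Hz. apply (img_A _ IHk). auto.
Qed.

Lemma Tn_conn (S0 : C -> Prop) : (forall z, S0 z -> A z) -> connectedC S0 -> forall k, connectedC (img (iterf k q) S0).
Proof. intros H HS k. induction k.
  - apply (conn_ext S0); auto. intro z. split.
    + intro Hz. exists z. split; auto.
    + intros [w [Hw ->]]. auto.
  - apply (conn_ext (img q (img (iterf k q) S0))).
    + intro z. rewrite Tn_succ. tauto.
    + apply img_connected; auto. apply Tn_A; auto.
Qed.

Lemma Tn_add (S0 : C -> Prop) i j z : img (iterf i q) (img (iterf j q) S0) z <-> img (iterf (i + j) q) S0 z.
Proof. unfold iterf. split.
  - intros [w [[u [Hu ->]] ->]]. exists u. split; auto. rewrite Nat.iter_add. auto.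
  - intros [u [Hu ->]]. exists (Nat.iter j q u). split. exists u; auto. rewrite Nat.iter_add. auto.
Qed.

Lemma periodic_limit o k : (1 <= k)%nat -> iterf k q o = o ->
  limit_set (fun n => iterf (S n) q o) o.
Proof.
  intros Hk Hp.
  assert (Ht : forall t, iterf (t * k) q o = o).
  { induction t. reflexivity. simpl. unfold iterf in *. rewrite Nat.iter_add, IHt. exact Hp. }
  intros e He N. exists ((S N) * k - 1)%nat. split.
  - destruct k. lia. simpl. nia.
  - replace (S (S N * k - 1)) with (S N * k)%nat by (destruct k; [lia|]; simpl; lia).
    rewrite Ht, cdist_refl. auto.
Qed.

Lemma rec_ex : exists dr, 0 < dr /\ forall o, O o -> forall k, (1 <= k)%nat -> dr <= cdist (iterf k q o) o.
Proof.
  destruct (fin_eps (fun e o => forall k, (1 <= k)%nat -> e <= cdist (iterf k q o) o) l) as [e [He H]].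
  - intros e e' x H1 H2 H3 k Hk. specialize (H3 k Hk). lra.
  - intros o Ho. apply Hl in Ho. pose proof (Hcnr o Ho) as Hn. unfold limit_set in Hn.
    apply not_all_ex_not in Hn. destruct Hn as [e Hn].
    apply imply_to_and in Hn. destruct Hn as [He Hn].
    apply not_all_ex_not in Hn. destruct Hn as [N Hn].
    assert (HN : forall n, (N <= n)%nat -> e <= cdist (iterf (S n) q o) o).
    { intros n Hn2. apply Rnot_lt_le. intro H1. apply Hn. eauto. }
    destruct (fin_eps_nat (fun e k => (1 <= k)%nat -> e <= cdist (iterf k q o) o) (S N)) as [e' [He' H']].
    + intros a b x H1 H2 H3 H4. specialize (H3 H4). lra.
    + intros k Hk. destruct k as [|k].
      * exists 1. split; [lra|]. intro; lia.
      * exists (cdist (iterf (S k) q o) o). split; [|intros; lra].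
        destruct (cdist_ge0 (iterf (S k) q o) o) as [H1|H1]; auto.
        exfalso. apply (Hcnr o Ho). apply (periodic_limit o (S k)); [lia|].
        apply cdist_eq0. auto.
    + exists (Rmin e e'). split. apply Rmin_case; lra.
      intros k Hk. destruct (Compare_dec.le_lt_dec (S N) k) as [Hk2|Hk2].
      * destruct k. lia. specialize (HN k ltac:(lia)). pose proof (Rmin_l e e'). lra.
      * specialize (H' k Hk2 Hk). pose proof (Rmin_r e e'). lra.
  - exists e. split; auto. intros o Ho. apply H. apply Hl. auto.
Qed.

Variable e0 : R.
Hypothesis He0 : 0 < e0.
Hypothesis He0P : forall o, O o -> forall j, (j < m)%nat ->
  forall z, P j z -> cdist z o < e0 -> P j o.

Lemma Q_near o z : O o -> A z -> cdist z o < e0 -> cdist z o = r * cdist (q z) (q o).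
Proof. intros Ho Hz Hd. destruct (A_cover z Hz) as [j [Hj Hjz]].
  apply (q_same j); auto. eapply He0P; eauto. Qed.

Lemma single_scale T i : (i < m)%nat -> (forall z, T z -> P i z) -> diam T = r * diam (img q T).
Proof.
  intros Hi HT. destruct A_bnd as [B HB].
  assert (TA : forall z, T z -> A z) by (intros; eapply P_A; eauto).
  assert (IA := img_A T TA).
  assert (HBT : forall u v, T u -> T v -> cdist u v <= B) by auto.
  assert (HBI : forall u v, img q T u -> img q T v -> cdist u v <= B) by auto.
  pose proof (diam_ge0 B T HBT). pose proof (diam_ge0 B _ HBI).
  apply Rle_antisym.
  - apply diam_le. apply Rmult_le_pos; lra.
    intros u v Hu Hv. rewrite (q_same i u v); auto.
    apply Rmult_le_compat_l; [lra|]. apply (diam_ub B); auto; [exists u|exists v]; auto.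
  - assert (diam (img q T) <= diam T / r).
    { apply diam_le. apply Rdiv_le_0_compat; lra.
      intros u' v' [u [Hu ->]] [v [Hv ->]].
      pose proof (q_same i u v Hi (HT u Hu) (HT v Hv)).
      pose proof (diam_ub B T u v HBT Hu Hv).
      apply Rmult_le_reg_l with r; auto. unfold Rdiv. rewrite <- Rmult_assoc, Rinv_r_simpl_m by lra. lra. }
    apply Rmult_le_reg_l with (/ r). apply Rinv_0_lt_compat; auto.
    rewrite <- Rmult_assoc, Rinv_l, Rmult_1_l by lra. unfold Rdiv in H1. lra.
Qed.

Lemma fold_bounds T o : O o -> T o -> (forall z, T z -> A z) -> (forall z, T z -> cdist z o < e0) ->
  diam T <= 2 * (r * diam (img q T)) /\ r * diam (img q T) <= 2 * diam T.
Proof.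
  intros Ho To TA Hn. destruct A_bnd as [B HB].
  assert (IA := img_A T TA).
  assert (HBT : forall u v, T u -> T v -> cdist u v <= B) by auto.
  assert (HBI : forall u v, img q T u -> img q T v -> cdist u v <= B) by auto.
  pose proof (diam_ge0 B T HBT). pose proof (diam_ge0 B _ HBI).
  assert (Hqo : img q T (q o)) by (exists o; auto).
  split.
  - apply diam_le. nra. intros u v Hu Hv.
    pose proof (cdist_tri u o v). rewrite (cdist_sym o v) in H1.
    rewrite (Q_near o u), (Q_near o v) in H1; auto.
    assert (cdist (q u) (q o) <= diam (img q T)) by (apply (diam_ub B); auto; exists u; auto).
    assert (cdist (q v) (q o) <= diam (img q T)) by (apply (diam_ub B); auto; exists v; auto).
    nra.
  - assert (diam (img q T) <= 2 * diam T / r).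
    { apply diam_le. apply Rdiv_le_0_compat; lra.
      intros u' v' [u [Hu ->]] [v [Hv ->]].
      pose proof (cdist_tri (q u) (q o) (q v)). rewrite (cdist_sym (q o) (q v)) in H1.
      pose proof (Q_near o u Ho (TA u Hu) (Hn u Hu)).
      pose proof (Q_near o v Ho (TA v Hv) (Hn v Hv)).
      pose proof (diam_ub B T u o HBT Hu To).
      pose proof (diam_ub B T v o HBT Hv To).
      apply Rmult_le_reg_l with r; auto. unfold Rdiv. rewrite <- Rmult_assoc, Rinv_r_simpl_m by lra. nra. }
    apply Rmult_le_reg_l with (/ r). apply Rinv_0_lt_compat; auto.
    rewrite <- Rmult_assoc, Rinv_l, Rmult_1_l by lra. unfold Rdiv in H1. lra.
Qed.

Lemma one_step T : (forall z, T z -> A z) -> connectedC T -> diam T < e0 ->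
  diam T = r * diam (img q T) \/
  (exists o, O o /\ T o /\ diam T <= 2 * (r * diam (img q T)) /\ r * diam (img q T) <= 2 * diam T).
Proof.
  intros TA HT Hd. destruct A_bnd as [B HB].
  destruct (dichotomy T TA HT) as [[i [Hi Hall]]|[o [Ho To]]].
  - left. apply (single_scale T i); auto.
  - right. exists o. split; auto. split; auto. apply (fold_bounds T o); auto.
    intros z Tz. pose proof (diam_ub B T z o (fun u v Hu Hv => HB u v (TA u Hu) (TA v Hv)) Tz To). lra.
Qed.

Lemma ball_open c e : openC (fun w => cdist w c < e).
Proof. intros z Hz. exists (e - cdist z c). split; [lra|]. intros w Hw.
  pose proof (cdist_tri w z c). lra. Qed.

Lemma out_open c e : openC (fun w => e < cdist w c).
Proof. intros z Hz. exists (cdist z c - e). split; [lra|]. intros w Hw.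
  pose proof (cdist_tri z w c). rewrite cdist_sym in Hw. lra. Qed.

Lemma back_step T : (forall z, T z -> A z) -> connectedC T -> r * diam (img q T) < e0 / 2 ->
  diam T <= 2 * (r * diam (img q T)).
Proof.
  intros TA HT Hd. destruct A_bnd as [B HB].
  assert (IA := img_A T TA).
  assert (HBT : forall u v, T u -> T v -> cdist u v <= B) by auto.
  assert (HBI : forall u v, img q T u -> img q T v -> cdist u v <= B) by auto.
  pose proof (diam_ge0 B T HBT). pose proof (diam_ge0 B _ HBI).
  destruct (dichotomy T TA HT) as [[i [Hi Hall]]|[o [Ho To]]].
  - rewrite (single_scale T i Hi Hall). nra.
  - apply (fold_bounds T o); auto.
    assert (Hz : forall z, T z -> cdist z o <= r * diam (img q T) \/ e0 <= cdist z o).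
    { intros z Tz. destruct (A_cover z (TA z Tz)) as [j [Hj Hjz]].
      destruct (classic (P j o)) as [Hpo|Hpo].
      - left. rewrite (q_same j z o); auto. apply Rmult_le_compat_l; [lra|].
        apply (diam_ub B); auto; [exists z|exists o]; auto.
      - right. apply Rnot_lt_le. intro H2. apply Hpo. eapply He0P; eauto. }
    assert (Hall : forall z, T z -> cdist z o < e0 / 2).
    { intros z Tz. apply NNPP. intro Hn.
      destruct (HT (fun w => cdist w o < e0 / 2) (fun w => e0 / 2 < cdist w o)
        (ball_open o _) (out_open o _)) as [w [Tw [H1 H2]]].
      - intros w Tw. destruct (Hz w Tw); [left|right]; lra.
      - exists o. split; auto. rewrite cdist_refl. lra.
      - exists z. split; auto. destruct (Hz z Tz); lra.
      - lra. }
    intros z Tz. specialize (Hall z Tz). lra.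
Qed.


Variable dr : R.
Hypothesis Hdr : 0 < dr.
Hypothesis HdrP : forall o, O o -> forall k, (1 <= k)%nat -> dr <= cdist (iterf k q o) o.

Lemma fwd (S0 : C -> Prop) n : (forall z, S0 z -> A z) -> connectedC S0 ->
  (forall i, (i < n)%nat -> diam (img (iterf i q) S0) < e0 /\ diam (img (iterf i q) S0) < dr) ->
  diam S0 * (/ r) ^ n <= 2 ^ (length l) * diam (img (iterf n q) S0) /\
  diam (img (iterf n q) S0) <= 2 ^ (length l) * (/ r) ^ n * diam S0.
Proof.
  intros SA HS Hsm. destruct A_bnd as [B HB].
  set (T := fun k => img (iterf k q) S0).
  assert (TA : forall k z, T k z -> A z) by (intro k; apply Tn_A; auto).
  assert (TB : forall k u v, T k u -> T k v -> cdist u v <= B) by (intros k u v Hu Hv; apply HB; eapply TA; eauto).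
  assert (Tge : forall k, 0 <= diam (T k)) by (intro k; apply (diam_ge0 B); apply TB).
  assert (S0ge : 0 <= diam S0) by (apply (diam_ge0 B); intros; apply HB; auto).
  assert (ES : diam (T 0%nat) = diam S0).
  { apply diam_ext. intro z. split. intros [w [Hw ->]]. auto. intro Hz. exists z. auto. }
  set (cnt := fun k => length (filter (fun o => dec (exists j, (j < k)%nat /\ T j o)) l)).
  assert (Hir : 0 < / r) by (apply Rinv_0_lt_compat; auto).
  assert (Hrir : r * / r = 1) by (apply Rinv_r; lra).
  assert (Hpos : forall c, 0 < 2 ^ c) by (intro c; apply pow_lt; lra).
  assert (inv : forall k, (k <= n)%nat ->
    diam S0 * (/ r) ^ k <= 2 ^ (cnt k) * diam (T k) /\
    diam (T k) <= 2 ^ (cnt k) * (/ r) ^ k * diam S0).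
  { induction k as [|k IH]; intro Hk.
    - simpl. rewrite ES. assert (1 <= 2 ^ cnt 0%nat) by (apply pow_R1_Rle; lra). nra.
    - destruct (IH ltac:(lia)) as [IH1 IH2].
      destruct (Hsm k ltac:(lia)) as [Hs1 Hs2]. change (diam (T k) < e0) in Hs1. change (diam (T k) < dr) in Hs2.
      assert (Eq : diam (img q (T k)) = diam (T (S k))).
      { apply diam_ext. intro z. unfold T. rewrite Tn_succ. tauto. }
      assert (Hmono : (cnt k <= cnt (S k))%nat).
      { apply filter_len_mono. intros x Hx. cbv beta in *. apply dec_true. apply (proj1 (dec_true _)) in Hx.
        destruct Hx as [j [Hj Hx]]. exists j. split; auto. }
      pose proof (pow_le (/ r) k (Rlt_le _ _ Hir)).
      simpl ((/ r) ^ S k).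
      destruct (one_step (T k) (TA k) (Tn_conn S0 SA HS k) Hs1) as [Ha|[o [Ho [To [Hb1 Hb2]]]]];
        rewrite Eq in *.
      + apply (arith_a r (/ r) (diam S0) (diam (T (S k))) (diam (T k)) ((/ r) ^ k) (2 ^ cnt k)); auto.
        apply Rle_pow; [lra|auto].
      + assert (Hlt : (cnt k < cnt (S k))%nat).
        { apply (filter_len_strict _ _ l) with o.
          - intros x Hx. apply dec_true. apply (proj1 (dec_true _)) in Hx.
            destruct Hx as [j [Hj Hx]]. exists j. split; auto.
          - apply Hl. auto.
          - apply dec_true. exists k. split; auto.
          - apply dec_false. intros [j [Hj Hjo]].
            destruct Hjo as [z [Sz Hoz]].
            assert (Tk : T k (iterf (k - j) q o)).
            { exists z. split; auto. rewrite Hoz. unfold iterf. rewrite <- Nat.iter_add.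
              f_equal. lia. }
            pose proof (diam_ub B (T k) _ _ (TB k) Tk To).
            pose proof (HdrP o Ho (k - j)%nat ltac:(lia)). lra. }
        apply (arith_b r (/ r) (diam S0) (diam (T (S k))) (diam (T k)) ((/ r) ^ k) (2 ^ cnt k)); auto.
        replace (2 * 2 ^ cnt k) with (2 ^ S (cnt k)) by reflexivity.
        apply Rle_pow; [lra|auto]. }
  destruct (inv n (le_n n)) as [I1 I2].
  assert (Hc : 2 ^ cnt n <= 2 ^ length l) by (apply Rle_pow; [lra| apply filter_len_le]).
  pose proof (pow_le (/ r) n (Rlt_le _ _ Hir)).
  split.
  - pose proof (Tge n). assert (2 ^ cnt n * diam (T n) <= 2 ^ length l * diam (T n)) by
      (apply Rmult_le_compat_r; auto). unfold T in *. lra.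
  - assert (2 ^ cnt n * (/ r) ^ n * diam S0 <= 2 ^ length l * (/ r) ^ n * diam S0).
    { apply Rmult_le_compat_r; auto. apply Rmult_le_compat_r; auto. }
    unfold T in *. lra.
Qed.

End Main.

Theorem lemma3p4 (m : nat) (r : R) (th : nat -> R) (cj : nat -> bool)
  (d : nat -> C) (A : C -> Prop) (q : C -> C) :
  (2 <= m)%nat -> 0 < r -> r < 1 ->
  is_attractor m r th cj d A -> connectedC A ->
  inverse_map m r th cj d A q ->
  (exists l : list C, forall z, overlap m r th cj d A z <-> In z l) ->
  (exists z, overlap m r th cj d A z) ->
  crit_nonrec (overlap m r th cj d A) q ->
  exists K delta1, 1 <= K /\ 0 < delta1 /\
    forall (S : C -> Prop) (n : nat),
      (forall z, S z -> A z) -> connectedC S ->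
      (diam (img (iterf n q) S) < delta1 \/ (/ r) ^ n * diam S < delta1) ->
      / K * (/ r) ^ n * diam S <= diam (img (iterf n q) S) /\
      diam (img (iterf n q) S) <= K * (/ r) ^ n * diam S.
Proof.
  intros Hm Hr0 Hr1 Hatt HAc Hinv [l Hl] _ Hcnr.
  destruct (eps0_ex m r th cj d A l Hr0 Hatt Hl) as [e0 [He0 He0P]].
  destruct (rec_ex m r th cj d A q l Hm Hl Hcnr) as [dr [Hdr HdrP]].
  pose proof (fwd m r th cj d A q l Hm Hr0 Hatt Hinv Hl e0 He0P dr HdrP) as FWD.
  pose proof (back_step m r th cj d A q Hm Hr0 Hatt Hinv e0 He0 He0P) as BS.
  destruct (A_bnd m r th cj d A Hatt) as [B HB].
  set (L := length l) in *.
  set (dl := Rmin (e0 / 2) dr).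
  assert (Hdl : 0 < dl) by (apply Rmin_case; lra).
  assert (Hdl1 : dl <= e0 / 2) by apply Rmin_l.
  assert (Hdl2 : dl <= dr) by apply Rmin_r.
  assert (HK : 1 <= 2 ^ L) by (apply pow_R1_Rle; lra).
  assert (HK2 : 2 ^ (L + 1) = 2 * 2 ^ L) by (rewrite pow_add; simpl; ring).
  exists (2 ^ L), (dl / 2 ^ (L + 1)).
  assert (Hd1 : 2 ^ L * (dl / 2 ^ (L + 1)) = dl / 2) by (rewrite HK2; field; lra).
  assert (Hd1p : 0 < dl / 2 ^ (L + 1)) by (apply Rdiv_lt_0_compat; lra).
  split; [auto|]. split; [auto|].
  intros S0 n SA HS Hcase.
  set (s := fun k => diam (img (iterf k q) S0)).
  assert (TA : forall k z, img (iterf k q) S0 z -> A z) by (apply Tn_A with m r th cj d; auto).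
  assert (sge : forall k, 0 <= s k).
  { intro k. apply (diam_ge0 B). intros u v Hu Hv. apply HB; eapply TA; eauto. }
  assert (S0ge : 0 <= diam S0) by (apply (diam_ge0 B); intros; apply HB; auto).
  assert (Hir : 1 <= / r) by (rewrite <- Rinv_1; apply Rinv_le_contravar; lra).
  assert (Hpow1 : forall k, 1 <= (/ r) ^ k) by (intro k; apply pow_R1_Rle; auto).
  assert (Hadd : forall i j, diam (img (iterf i q) (img (iterf j q) S0)) = s (i + j)%nat).
  { intros i j. apply diam_ext. intro z. apply Tn_add. }
  assert (Hsucc : forall j, diam (img q (img (iterf j q) S0)) = s (Datatypes.S j)).
  { intro j. apply diam_ext. intro z. rewrite Tn_succ. tauto. }
  assert (Hall : forall i, (i < n)%nat -> s i < dl).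
  { destruct Hcase as [H1|H2]; [change (s n < dl / 2 ^ (L + 1)) in H1|].

    - assert (Cl : forall t, (t <= n)%nat -> forall i, (n - t <= i)%nat -> (i <= n)%nat -> s i < dl / 2).
      { induction t as [|t IH]; intros Ht i Hi1 Hi2.
        - replace i with n by lia.
          assert (dl / 2 ^ (L + 1) <= dl / 2).
          { unfold Rdiv. apply Rmult_le_compat_l; [lra|]. apply Rinv_le_contravar; lra. }
          lra.
        - destruct (Compare_dec.le_lt_dec (n - t) i) as [Hi|Hi].
          + apply IH; auto; lia.
          + assert (Ei : i = (n - Datatypes.S t)%nat) by lia.
            assert (Hnext : s (Datatypes.S i) < dl / 2) by (apply IH; lia).
            assert (Hsi : s i < dl).
            { assert (s i <= 2 * (r * s (Datatypes.S i))).
              { rewrite <- (Hsucc i). apply BS.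
                - apply TA.
                - apply (Tn_conn m r th cj d A q Hinv); auto.
                - rewrite Hsucc. pose proof (sge (Datatypes.S i)). nra. }
              pose proof (sge (Datatypes.S i)). nra. }
            destruct (FWD (img (iterf i q) S0) (Datatypes.S t)) as [F1 _].
            * apply TA.
            * apply (Tn_conn m r th cj d A q Hinv); auto.
            * intros i' Hi'. rewrite Hadd.
              destruct i' as [|i'].
              -- simpl. fold (s i). lra.
              -- assert (s (Datatypes.S i' + i)%nat < dl / 2) by (apply IH; lia). lra.
            * rewrite Hadd in F1. replace (Datatypes.S t + i)%nat with n in F1 by lia.
              fold (s i) in F1. fold (s n) in F1.
              pose proof (Hpow1 (Datatypes.S t)). pose proof (sge i).
              assert (s i <= s i * (/ r) ^ Datatypes.S t) by nra.
              assert (2 ^ L * s n < 2 ^ L * (dl / 2 ^ (L + 1))) by (apply Rmult_lt_compat_l; lra).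
              lra. }
      intros i Hi. assert (s i < dl / 2) by (apply (Cl n); lia). lra.
    - assert (Cl : forall j, (j <= n)%nat -> forall i, (i <= j)%nat -> s i < dl).
      { assert (Key : forall i, (i <= n)%nat -> (forall i', (i' < i)%nat -> s i' < dl) -> s i < dl).
        { intros i Hi Hprev. destruct (FWD S0 i SA HS) as [_ F2].
          - intros i' Hi'. specialize (Hprev i' Hi'). unfold s in Hprev. split; lra.
          - fold (s i) in F2.
            assert ((/ r) ^ i <= (/ r) ^ n) by (apply Rle_pow; auto).
            assert ((/ r) ^ i * diam S0 <= (/ r) ^ n * diam S0) by (apply Rmult_le_compat_r; auto).
            assert (2 ^ L * ((/ r) ^ i * diam S0) < 2 ^ L * (dl / 2 ^ (L + 1))).
            { apply Rmult_lt_compat_l; lra. }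
            rewrite Rmult_assoc in F2. lra. }
        induction j as [|j IH]; intros Hj i Hi.
        - replace i with 0%nat by lia. apply Key. lia. intros; lia.
        - destruct (Compare_dec.le_lt_dec i j) as [Hij|Hij].
          + apply IH; auto; lia.
          + replace i with (Datatypes.S j) by lia. apply Key; auto.
            intros i' Hi'. apply (IH ltac:(lia)). lia. }
      intros i Hi. apply (Cl n); lia. }
  destruct (FWD S0 n SA HS) as [F1 F2].
  - intros i Hi. specialize (Hall i Hi). unfold s in Hall. split; lra.
  - split; [|exact F2].
    assert (/ 2 ^ L * (diam S0 * (/ r) ^ n) <= / 2 ^ L * (2 ^ L * diam (img (iterf n q) S0))).
    { apply Rmult_le_compat_l; auto. apply Rlt_le, Rinv_0_lt_compat; lra. }
    replace (/ 2 ^ L * (2 ^ L * diam (img (iterf n q) S0))) with (diam (img (iterf n q) S0)) in H by (field; lra).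
    replace (/ 2 ^ L * (/ r) ^ n * diam S0) with (/ 2 ^ L * (diam S0 * (/ r) ^ n)) by ring. exact H.
Qed.
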